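(* Let $f_1,\ldots,f_k\in\mathbb{R}[X_1,\ldots,X_n]$ with $\deg f_i<d$ for all $i$, and suppose that the origin is not a solution of the system $f_1\ge 0,\ldots,f_k\ge 0$ and that the solution set $\{x\in\mathbb{R}^n: f_1(x)\ge0,\ldots,f_k(x)\ge 0\}$ is bounded. Let $D$ be the minimal even integer not less than $kd+1$ and, for a parameter $\varepsilon$, let $$g(\varepsilon)=\prod_{1\le i\le k}(f_i+\varepsilon)-\varepsilon^{k+1}\sum_{1\le j\le n}X_j^{D}.$$ If the system $f_1\ge 0,\ldots,f_k\ge 0$ has a solution in $\mathbb{R}^n$, then there is a solution $v'$ of it which is a limit of real roots of the system $\frac{\partial g(\varepsilon)}{\partial X_1}=\cdots=\frac{\partial g(\varepsilon)}{\partial X_n}=0$ as $\varepsilon\to 0^+$; that is, there are positive numbers $\varepsilon_j\to 0$ and points $v_j\in\mathbb{R}^n$ with $\frac{\partial g(\varepsilon_j)}{\partial X_l}(v_j)=0$ for all $1\le l\le n$ such that $v_j\to v'$. *)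

(* Defs.v *)
From HB Require Import structures.
From mathcomp Require Import all_boot all_order all_algebra.
From mathcomp Require Import reals.
From mathcomp Require Import mpoly.
Set Implicit Arguments. Unset Strict Implicit. Unset Printing Implicit Defensive.
Import Order.TTheory GRing.Theory Num.Theory.
Local Open Scope ring_scope.

Definition is_sol (R : realType) (n k : nat) (f : 'I_k -> {mpoly R[n]})
  (x : 'I_n -> R) : Prop := forall i : 'I_k, 0 <= (f i).@[x].

Definition bounded_set (R : realType) (n : nat) (S : ('I_n -> R) -> Prop) : Prop :=
  exists M : R, forall x, S x -> forall l : 'I_n, `|x l| <= M.

Definition min_even_ge (m : nat) : nat := if odd m then m.+1 else m.

Definition gpert (R : realType) (n k D : nat) (f : 'I_k -> {mpoly R[n]}) (eps : R)
  : {mpoly R[n]} :=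
  \prod_(i < k) (f i + eps%:MP) - (eps ^+ k.+1) *: \sum_(j < n) 'X_j ^+ D.

Definition cvg_seq (R : realType) (u : nat -> R) (a : R) : Prop :=
  forall e : R, 0 < e -> exists N : nat, forall j, (N <= j)%N -> `|u j - a| < e.

Definition cvg_vec (R : realType) (n : nat) (u : nat -> 'I_n -> R) (a : 'I_n -> R)
  : Prop := forall l : 'I_n, cvg_seq (fun j => u j l) (a l).

(* Main.v *)
From Pilot Require Import Defs.
From HB Require Import structures.
From mathcomp Require Import all_boot all_order all_algebra.
From mathcomp Require Import reals.
From mathcomp Require Import mpoly.
From mathcomp Require Import ring lra zify.
From mathcomp Require Import all_classical all_reals all_analysis.
Import Pilot.Defs.
Import Order.TTheory GRing.Theory Num.Theory.
Import numFieldNormedType.Exports.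
Local Open Scope classical_set_scope.
Local Open Scope ring_scope.

Set Implicit Arguments. Unset Strict Implicit. Unset Printing Implicit Defensive.

Lemma bound_mul (R : realFieldType) (Pt Qt P0 Q0 a b Cp Cq t : R) :
 0 <= Cp -> 0 <= Cq -> `|t| <= 1 -> `|Pt - P0 - t*a| <= Cp * t^+2 -> `|Qt - Q0 - t*b| <= Cq*t^+2 ->
 `|Pt*Qt - P0*Q0 - t*(a*Q0 + P0*b)| <= (Cp*(`|Q0| + `|b| + Cq) + `|P0|*Cq + `|a|*(`|b|+Cq)) * t^+2.
Proof.
move=> Cp0 Cq0 ht hP hQ.
set Ep := Pt - P0 - t*a in hP; set Eq := Qt - Q0 - t*b in hQ.
have -> : Pt*Qt - P0*Q0 - t*(a*Q0 + P0*b) = Ep*Qt + P0*Eq + t*a*(t*b + Eq)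
  by rewrite /Ep /Eq; ring.
have t2 : t^+2 = `|t|^+2 by rewrite real_normK ?num_real.
have u0 : 0 <= `|t| by [].
have t2le : `|t|^+2 <= 1 by rewrite expr_le1.
have hQt : `|Qt| <= `|Q0| + `|b| + Cq.
  have -> : Qt = Q0 + t*b + Eq by rewrite /Eq; ring.
  apply: (le_trans (ler_normD _ _)); apply: lerD; last first.
    by apply: (le_trans hQ); rewrite -[X in _ <= X]mulr1 ler_wpM2l // t2.
  apply: (le_trans (ler_normD _ _)); apply: lerD => //.
  by rewrite normrM -[X in _ <= X]mul1r ler_wpM2r.
have hEq : `|Eq| <= Cq * `|t|^+2 by rewrite -t2.
have hEp : `|Ep| <= Cp * `|t|^+2 by rewrite -t2.
clearbody Ep Eq.
rewrite t2.
have h1 : `|Ep * Qt| <= Cp * (`|Q0| + `|b| + Cq) * `|t|^+2.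
  by rewrite normrM mulrAC; apply: ler_pM.
have h2 : `|P0 * Eq| <= `|P0| * Cq * `|t|^+2.
  by rewrite normrM -mulrA; apply: ler_wpM2l.
have hb : `|t * b + Eq| <= (`|b| + Cq) * `|t|.
  apply: (le_trans (ler_normD _ _)); rewrite mulrDl normrM mulrC; apply: lerD => //.
  apply: (le_trans hEq); rewrite expr2 mulrA ler_wpM2r //.
  by rewrite -[X in _ <= X]mulr1 ler_wpM2l.
have h3 : `|t * a * (t * b + Eq)| <= `|a| * (`|b| + Cq) * `|t|^+2.
  rewrite normrM normrM (mulrC `|t|) -mulrA -mulrA; apply: ler_wpM2l => //.
  rewrite mulrC expr2 mulrA; apply: ler_wpM2r => //.
apply: (le_trans (ler_normD _ _)); rewrite !mulrDl; apply: lerD => //.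
by apply: (le_trans (ler_normD _ _)); apply: lerD.
Qed.

Definition shiftv (R : ringType) n (v : 'I_n -> R) (l : 'I_n) (t : R) : 'I_n -> R :=
  fun i => v i + (if i == l then t else 0).

Definition Tay (R : realType) n (v : 'I_n -> R) (l : 'I_n) (p : {mpoly R[n]}) :=
  exists2 C, 0 <= C & forall t, `|t| <= 1 ->
    `|p.@[shiftv v l t] - p.@[v] - t * (mderiv l p).@[v]| <= C * t^+2.

Lemma TayC (R : realType) n v l (c : R) : @Tay R n v l c%:MP.
Proof.
exists 0 => // t _; rewrite !mevalC mderivC meval0 mulr0 subrr subr0 normr0 mul0r.
by [].
Qed.

Lemma TayD (R : realType) n v l p q : @Tay R n v l p -> Tay v l q -> Tay v l (p + q).
Proof.
move=> [Cp Cp0 hp] [Cq Cq0 hq]; exists (Cp + Cq); first exact: addr_ge0.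
move=> t ht; rewrite !mevalD mderivD mevalD.
have -> : p.@[shiftv v l t] + q.@[shiftv v l t] - (p.@[v] + q.@[v]) -
   t * ((mderiv l p).@[v] + (mderiv l q).@[v]) =
   (p.@[shiftv v l t] - p.@[v] - t * (mderiv l p).@[v]) +
   (q.@[shiftv v l t] - q.@[v] - t * (mderiv l q).@[v]) by ring.
by apply: (le_trans (ler_normD _ _)); rewrite mulrDl; apply: lerD; [apply: hp|apply: hq].
Qed.

Lemma TayM (R : realType) n v l p q : @Tay R n v l p -> Tay v l q -> Tay v l (p * q).
Proof.
move=> [Cp Cp0 hp] [Cq Cq0 hq].
eexists; last first.
  move=> t ht; rewrite !mevalM mderivM mevalD !mevalM.
  have -> : t * ((mderiv l p).@[v] * q.@[v] + p.@[v] * (mderiv l q).@[v]) =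
     t * ((mderiv l p).@[v] * q.@[v] + p.@[v] * (mderiv l q).@[v]) by [].
  exact: bound_mul (hp t ht) (hq t ht).
by apply: addr_ge0; [apply: addr_ge0|]; apply: mulr_ge0 => //;
  rewrite ?addr_ge0.
Qed.

Lemma TayXU (R : realType) n v l (i : 'I_n) : @Tay R n v l 'X_i.
Proof.
exists 0 => // t _; rewrite mderivX !mevalXU mevalZ mnm1E /shiftv.
have [->|ne] := eqVneq i l.
  have -> : (U_(l) - U_(l))%MM = 0%MM by apply/mnmP => j; rewrite mnmBE subnn mnm0E.
  by rewrite mpolyX0 meval1 mul0r normr_le0 /= mulr1; apply/eqP; ring.
by rewrite /= mul0r mulr0 addr0 subrr subr0 normr0 mul0r.
Qed.

Lemma Tay_all (R : realType) n v l (p : {mpoly R[n]}) : Tay v l p.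
Proof.
elim/mpolyind: p => [|c m p _ _ hp]; first by rewrite -mpolyC0; apply: TayC.
apply: TayD => //; rewrite -mul_mpolyC; apply: TayM; first exact: TayC.
rewrite mpolyXE_id; elim/big_rec: _ => [|i x _ hx]; first by rewrite -mpolyC1; apply: TayC.
apply: TayM => //; elim: (m i) => [|k hk]; first by rewrite expr0 -mpolyC1; apply: TayC.
by rewrite exprS; apply: TayM => //; apply: TayXU.
Qed.

Lemma fermat (R : realType) (G : R -> R) a C d : 0 < d -> 0 <= C ->
 (forall t, `|t| <= 1 -> `|G t - G 0 - t * a| <= C * t^+2) ->
 (forall t, `|t| < d -> G t <= G 0) -> a = 0.
Proof.
move=> d0 C0 hT hM.
have key : forall s, 0 < s -> s < d -> s <= 1 -> `|a| <= C * s.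
  move=> s s0 sd s1.
  have hs1 : `|s| <= 1 by rewrite ger0_norm // ltW.
  have hs2 : `|- s| <= 1 by rewrite normrN.
  have hd1 : `|s| < d by rewrite ger0_norm // ltW.
  have hd2 : `|- s| < d by rewrite normrN.
  move: (hT _ hs1) (hT _ hs2) (hM _ hd1) (hM _ hd2).
  rewrite !ler_norml sqrrN => /andP[h1 _] /andP[h2 _] m1 m2.
  have e1 : s * a <= C * s ^+ 2 by lra.
  have e2 : - (s * a) <= C * s ^+ 2 by lra.
  apply/andP; split; nra.
apply/eqP; rewrite -normr_eq0; apply/negP => /negP an.
have ap : 0 < `|a| by rewrite lt_def an normr_ge0.
pose s := Num.min (d / 2) (Num.min 1 (`|a| / (2 * (C + 1)))).
have s0 : 0 < s.
  rewrite /s !lt_min; apply/andP; split; first lra.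
  apply/andP; split; first lra.
  apply: divr_gt0 => //; lra.
have sd : s < d by rewrite /s gt_min; apply/orP; left; lra.
have s1 : s <= 1 by rewrite /s !ge_min lexx orbT.
have s2 : s <= `|a| / (2 * (C + 1)) by rewrite /s !ge_min lexx !orbT.
have := key s s0 sd s1.
have : C * s <= C * (`|a| / (2 * (C + 1))) by apply: ler_wpM2l.
have -> : C * (`|a| / (2 * (C + 1))) = `|a| * (C / (2 * (C + 1))).
  by rewrite mulrA (mulrC C) -mulrA.
have : C / (2 * (C + 1)) < 1.
  rewrite ltr_pdivrMr; last lra. lra.
move=> h3 h4 h5.
have : `|a| * (C / (2 * (C + 1))) < `|a| by rewrite -[X in _ < X]mulr1 ltr_pM2l.
lra.
Qed.

Lemma shiftv0 (R : ringType) n (v : 'I_n -> R) l : shiftv v l 0 =1 v.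
Proof. by move=> i; rewrite /shiftv; case: ifP; rewrite addr0. Qed.

Lemma crit (R : realType) n (p : {mpoly R[n]}) (w : 'I_n -> R) l d : 0 < d ->
  (forall t, `|t| < d -> p.@[shiftv w l t] <= p.@[w]) -> (mderiv l p).@[w] = 0.
Proof.
move=> d0 hM; have [C C0 hC] := Tay_all w l p.
apply: (@fermat R (fun t => p.@[shiftv w l t]) _ C d) => //=; rewrite (meval_eq _ (shiftv0 w l)) //.
Qed.

Lemma small_inv (R : realType) (e : R) : 0 < e ->
  exists m : nat, forall j, (m <= j)%N -> (j.+1%:R : R)^-1 < e.
Proof.
move=> e0; have b0 : 0 <= e^-1 by rewrite invr_ge0 ltW.
exists (Num.bound e^-1) => j hj.
have h1 := archi_boundP b0.
have h2 : ((Num.bound e^-1)%:R : R) <= j%:R by rewrite ler_nat.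
have h3 : (j%:R : R) < j.+1%:R by rewrite ltr_nat.
have jp : (0 : R) < j.+1%:R by rewrite ltr0n.
rewrite invf_plt ?posrE //.
by apply: (lt_le_trans h1); apply: ltW; apply: (le_lt_trans h2 h3).
Qed.

Definition evr (R : realType) n (p : {mpoly R[n]}) (x : 'rV[R]_n) : R :=
  p.@[fun i => x ord0 i].

Lemma evr_contD (R : realType) n (p q : {mpoly R[n]}) :
  continuous (evr p) -> continuous (evr q) -> continuous (evr (p + q)).
Proof.
move=> hp hq x.
have -> : evr (p + q) = evr p + evr q by apply/funext => y; rewrite /evr mevalD.
exact: (continuousD (hp x) (hq x)).
Qed.

Lemma evr_contM (R : realType) n (p q : {mpoly R[n]}) :
  continuous (evr p) -> continuous (evr q) -> continuous (evr (p * q)).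
Proof.
move=> hp hq x.
have -> : evr (p * q) = evr p \* evr q by apply/funext => y; rewrite /evr mevalM.
exact: (continuousM (hp x) (hq x)).
Qed.

Lemma evr_contC (R : realType) n (c : R) : continuous (@evr R n c%:MP).
Proof.
have -> : @evr R n c%:MP = fun=> c by apply/funext => y; rewrite /evr mevalC.
exact: cst_continuous.
Qed.

Lemma evr_contX (R : realType) n (i : 'I_n) : continuous (@evr R n 'X_i).
Proof.
have -> : @evr R n 'X_i = fun x => x ord0 i by apply/funext => y; rewrite /evr mevalXU.
exact: coord_continuous.
Qed.

Lemma evr_cont (R : realType) n (p : {mpoly R[n]}) : continuous (evr p).
Proof.
elim/mpolyind: p => [|c m p _ _ hp]; first by rewrite -mpolyC0; apply: evr_contC.
apply: evr_contD => //; rewrite -mul_mpolyC; apply: evr_contM; first exact: evr_contC.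
rewrite mpolyXE_id; elim/big_rec: _ => [|i x _ hx]; first by rewrite -mpolyC1; apply: evr_contC.
apply: evr_contM => //; elim: (m i) => [|k hk]; first by rewrite expr0 -mpolyC1; apply: evr_contC.
by rewrite exprS; apply: evr_contM => //; apply: evr_contX.
Qed.

Lemma row_ball (R : realType) n (x y : 'I_n -> R) d : 0 < d ->
  (forall i, `|x i - y i| < d) -> ball (\row_i x i : 'rV[R]_n) d (\row_i y i).
Proof.
move=> d0 h; rewrite -ball_normE /=.
change (mx_norm (\row_i x i - \row_i y i : 'rV[R]_n) < d); rewrite mx_normrE; apply: bigmax_lt => // -[a b] _ /=.
by rewrite !mxE.
Qed.

Lemma evr_econt (R : realType) n (p : {mpoly R[n]}) (x : 'I_n -> R) e : 0 < e ->
  exists2 d, 0 < d & forall y, (forall i, `|y i - x i| < d) -> `|p.@[y] - p.@[x]| < e.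
Proof.
move=> e0; have := @evr_cont R n p (\row_i x i).
move/cvgrPdist_lt => /(_ e e0) /nbhs_ballP [d d0 hd].
exists d => // y hy; have := hd (\row_i y i) (row_ball d0 (fun i => _)).
rewrite /evr distrC.
have -> : (fun i => (\row_i0 y i0) ord0 i) = y by apply/funext => i; rewrite mxE.
have -> : (fun i => (\row_i0 x i0) ord0 i) = x by apply/funext => i; rewrite mxE.
by apply => i; rewrite distrC.
Qed.

Unset Implicit Arguments.

Lemma gpertE (R : realType) n k D (f : 'I_k -> {mpoly R[n]}) eps (x : 'I_n -> R) :
  (gpert D f eps).@[x] =
  \prod_(i < k) ((f i).@[x] + eps) - eps ^+ k.+1 * \sum_(j < n) x j ^+ D.
Proof.
rewrite /gpert mevalB mevalZ (big_morph _ (mevalM x) (meval1 x)).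
rewrite (big_morph _ (mevalD x) (meval0 x)).
congr (_ - _ * _); first by apply: eq_bigr => i _; rewrite mevalD mevalC.
apply: eq_bigr => j _; elim: D => [|m ih]; first by rewrite !expr0 meval1.
by rewrite !exprS mevalM ih mevalXU.
Qed.

Lemma entry_le_norm (R : realType) n (x : 'rV[R]_n) i : `|x ord0 i| <= `|x|.
Proof.
change (`|x ord0 i| <= mx_norm x); rewrite mx_normrE.
exact: (le_bigmax 0 (fun ij : 'I_1 * 'I_n => `|x ij.1 ij.2|) (ord0, i)).
Qed.

Lemma ball_row (R : realType) n (x y : 'rV[R]_n) e : ball x e y ->
  forall i, `|x ord0 i - y ord0 i| < e.
Proof.
rewrite -ball_normE /= => h i.
apply: le_lt_trans h; have := @entry_le_norm R n (x - y) i; by rewrite !mxE.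
Qed.

Lemma evr_row (R : realType) n (p : {mpoly R[n]}) (y : 'I_n -> R) :
  evr p (\row_i y i) = p.@[y].
Proof. by rewrite /evr; apply: meval_eq => i; rewrite mxE. Qed.

Theorem lemma5p1 (R : realType) (n k d : nat) (f : 'I_k -> {mpoly R[n]})
  (hdeg : forall i : 'I_k, (msize (f i) <= d)%N)
  (h0 : ~ is_sol f (fun _ => 0))
  (hbdd : bounded_set (is_sol f))
  (hsol : exists x, is_sol f x) :
  let D := min_even_ge (k * d + 1) in
  exists v' : 'I_n -> R, is_sol f v' /\
    exists (eps : nat -> R) (v : nat -> 'I_n -> R),
      (forall j, 0 < eps j) /\ cvg_seq eps 0 /\
      (forall j (l : 'I_n), (mderiv l (gpert D f (eps j))).@[v j] = 0) /\
      cvg_vec v v'.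
Proof.
move=> D.
have Deven : ~~ odd D.
  rewrite /D /min_even_ge; case: ifP => h; first by rewrite /= h.
  by rewrite h.
have Sge0 : forall x : 'I_n -> R, 0 <= \sum_(j < n) x j ^+ D.
  by move=> x; apply: sumr_ge0 => j _; apply: exprn_even_ge0.
case: hsol => x0 hx0.
case: hbdd => M hM.
pose B := `|M| + 1.
pose S0 := \sum_(j < n) x0 j ^+ D.
pose N := Num.bound S0.
have hN : S0 < N%:R by apply: archi_boundP; apply: Sge0.
pose eps := fun j : nat => ((j + N).+1%:R : R)^-1.
have eps_gt0 : forall j, 0 < eps j by move=> j; rewrite invr_gt0 ltr0n.
have eps_le : forall j, eps j <= (j.+1%:R)^-1.
  move=> j; rewrite lef_pV2 ?posrE ?ltr0n // ler_nat; lia.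
have epsS0 : forall j, eps j * S0 < 1.
  move=> j; have e1 : eps j * (j + N).+1%:R = 1 by rewrite mulVf // pnatr_eq0.
  have : S0 < (j + N).+1%:R.
    apply: (lt_le_trans hN); rewrite ler_nat; lia.
  have := eps_gt0 j; nra.
have gx0 : forall j, 0 < (gpert D f (eps j)).@[x0].
  move=> j; rewrite gpertE.
  have hp : eps j ^+ k <= \prod_(i < k) ((f i).@[x0] + eps j).
    have -> : eps j ^+ k = \prod_(i < k) eps j by rewrite prodr_const card_ord.
    apply: ler_prod => i _.
    by rewrite ltW ?eps_gt0 //= lerDr hx0.
  have := epsS0 j; rewrite -/S0 exprS => h1.
  have ek : 0 < eps j ^+ k by rewrite exprn_gt0.
  have := eps_gt0 j; nra.
pose Bx := [set x : 'rV[R]_n | forall i, (`[- B, B]%classic : set R) (x ord0 i)]%classic.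
have Bx_c : compact Bx.
  by apply: (@rV_compact _ _ (fun=> `[- B, B]%classic)) => _; apply: segment_compact.
pose Cs := fun e : R => (\bigcap_(i in setT) (evr (f i)) @^-1` [set y : R | - e <= y]%classic)%classic.
have Cs_cl : forall e, closed (Cs e).
  move=> e; apply: closed_bigI => i _; apply: preimage_closed.
    by move=> x _; apply: evr_cont.
  exact: closed_ge.
have B0 : 0 <= `|M| by [].
have x0B : Bx (\row_i x0 i).
  move=> i /=; rewrite mxE in_itv /= -ler_norml.
  apply: (le_trans (hM _ hx0 i)); rewrite /B; apply: (le_trans (ler_norm M)); lra.
have maxex : forall j, exists c : 'rV[R]_n, (Bx `&` Cs (eps j))%classic c /\
   forall t, (Bx `&` Cs (eps j))%classic t ->
     evr (gpert D f (eps j)) t <= evr (gpert D f (eps j)) c.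
  move=> j.
  have ne : ((Bx `&` Cs (eps j)) !=set0)%classic.
    exists (\row_i x0 i); split => // i _ /=; rewrite evr_row.
    by apply: (le_trans _ (hx0 i)); rewrite oppr_le0 ltW.
  have [c cin cmax] := @EVT_max_rV R n (evr (gpert D f (eps j))) (Bx `&` Cs (eps j))%classic
    ne (compact_closedI Bx_c (Cs_cl _)) (continuous_subspaceT (@evr_cont R n _)).
  exists c; split; first by move: cin; rewrite inE.
  by move=> t tin; apply: cmax; rewrite inE.
have [vr hvr] := choice maxex.
pose v := fun j (i : 'I_n) => vr j ord0 i.
have vrow : forall j, vr j = \row_i v j i by move=> j; apply/rowP => i; rewrite mxE.
have P1 : forall j i, `|v j i| <= B.
  move=> j i; have [[h _] _] := hvr j; have := h i.
  by rewrite /= in_itv /= -ler_norml.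
have P2 : forall j i, - eps j <= (f i).@[v j].
  move=> j i; have [[_ h] _] := hvr j; have := h i I.
  by rewrite /= vrow evr_row.
have P3 : forall j (y : 'I_n -> R), (forall i, `|y i| <= B) ->
    (forall i, - eps j <= (f i).@[y]) -> (gpert D f (eps j)).@[y] <= (gpert D f (eps j)).@[v j].
  move=> j y hy1 hy2; have [_ h] := hvr j.
  have := h (\row_i y i); rewrite vrow !evr_row; apply; split.
    by move=> i /=; rewrite mxE in_itv /= -ler_norml.
  by move=> i _ /=; rewrite evr_row.
have P4 : forall j i, - eps j < (f i).@[v j].
  move=> j i; rewrite lt_def P2 andbT; apply/negP => /eqP hi.
  have h1 : 0 < (gpert D f (eps j)).@[v j].
    apply: (lt_le_trans (gx0 j)); apply: P3 => // i'.
      apply: (le_trans (hM _ hx0 i')); rewrite /B; apply: (le_trans (ler_norm M)); lra.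
    by apply: (le_trans _ (hx0 i')); rewrite oppr_le0 ltW.
  move: h1; rewrite gpertE (bigD1 i) //= hi addNr mul0r sub0r oppr_gt0.
  apply/negP; rewrite -leNgt; apply: mulr_ge0; last exact: Sge0.
  by rewrite exprn_ge0 // ltW.
have FB : (vr @ \oo) Bx by exists 0%N => // j _; have [[h _] _] := hvr j.
have [v'r [_ cl]] := Bx_c _ _ FB.
pose v' := fun i => v'r ord0 i.
have ext : forall e : R, 0 < e -> forall K, exists j, (K <= j)%N /\ forall i, `|v j i - v' i| < e.
  move=> e e0 K.
  have FA : (vr @ \oo) [set y | exists j, (K <= j)%N /\ y = vr j]%classic.
    by exists K => // j /= hj; exists j.
  have [y [[j [hj ->]] hb]] := cl _ _ FA (nbhsx_ballx v'r e e0).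
  by exists j; split => // i; rewrite distrC; apply: ball_row.
have ext2 : forall m, exists g : nat -> nat, forall K, (K <= g K)%N /\
    forall i, `|v (g K) i - v' i| < (m.+1%:R)^-1.
  move=> m; have m0 : (0 : R) < (m.+1%:R)^-1 by rewrite invr_gt0 ltr0n.
  have [g hg] := @choice nat nat (fun K j => (K <= j)%N /\
    forall i, `|v j i - v' i| < (m.+1%:R)^-1) (ext _ m0).
  by exists g.
have [pk hpk] := choice ext2.
pose phi := fix phi m := if m is m'.+1 then pk m (phi m').+1 else pk 0%N 0%N.
have phiS : forall m, phi m.+1 = pk m.+1 (phi m).+1 by [].
have Q1 : forall m, (m <= phi m)%N.
  elim => [|m ih] //; rewrite phiS; have [h _] := hpk m.+1 (phi m).+1; lia.
have Q2 : forall m i, `|v (phi m) i - v' i| < (m.+1%:R)^-1.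
  by case => [|m] i; [have [_ h] := hpk 0%N 0%N | rewrite phiS; have [_ h] := hpk m.+1 (phi m).+1]; apply: h.
have inv_mono : forall a b : nat, (a <= b)%N -> (b.+1%:R : R)^-1 <= (a.+1%:R)^-1.
  by move=> a b hab; rewrite lef_pV2 ?posrE ?ltr0n // ler_nat.
have eps_phi : forall m, eps (phi m) <= (m.+1%:R)^-1.
  by move=> m; apply: (le_trans (eps_le _)); apply: inv_mono.
have solv' : is_sol f v'.
  move=> i; have [//|neg] := leP 0 ((f i).@[v']).
  pose e := - (f i).@[v'] / 2.
  have e0 : 0 < e by rewrite /e; lra.
  have [dl dl0 hdl] := evr_econt (f i) v' e0.
  have me0 : 0 < Num.min dl e by rewrite lt_min dl0 e0.
  have [m hm] := small_inv me0.
  have hm' := hm m (leqnn m).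
  have hy : forall i', `|v (phi m) i' - v' i'| < dl.
    move=> i'; apply: (lt_trans (Q2 m i')); apply: (lt_le_trans hm').
    by rewrite ge_min lexx.
  have := hdl _ hy; rewrite ltr_norml => /andP[a1 a2].
  have he : eps (phi m) < e.
    apply: (le_lt_trans (eps_phi m)); apply: (lt_le_trans hm').
    by rewrite ge_min lexx orbT.
  have := P2 (phi m) i; rewrite /e in he a1 a2; lra.
have v'M : forall i, `|v' i| <= M by apply: hM.
exists v'; split => //.
exists (fun m => eps (phi m.+1)), (fun m => v (phi m.+1)).
split; first by move=> j; apply: eps_gt0.
split.
  move=> e e0; have [m0 hm0] := small_inv e0; exists m0 => j hj.
  rewrite subr0 ger0_norm; last exact: ltW.
  apply: (le_lt_trans (eps_phi _)); apply: (le_lt_trans (inv_mono _ _ (leqnSn j))).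
  exact: hm0.
split; last first.
  move=> l e e0; have [m0 hm0] := small_inv e0; exists m0 => j hj.
  apply: (lt_le_trans (Q2 _ l)); apply: (le_trans (inv_mono _ _ (leqnSn j))).
  exact: ltW (hm0 j hj).
move=> m l.
pose w := v (phi m.+1); pose ep := eps (phi m.+1).
have wB : forall i, `|w i| <= `|M| + 2^-1.
  move=> i; have h1 : `|w i| <= `|v' i| + `|w i - v' i|.
    by have := ler_normD (v' i) (w i - v' i); rewrite addrC subrK.
  have h2 : `|w i - v' i| <= 2^-1.
    apply: ltW; apply: (lt_le_trans (Q2 _ i)); rewrite lef_pV2 ?posrE ?ltr0n // ler_nat //.
  have h3 := v'M i; have h4 := ler_norm M; lra.
have H : forall i, \forall t \near (0 : R), - ep <= (f i).@[shiftv w l t].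
  move=> i; have ei0 : 0 < (f i).@[w] + ep by have := P4 (phi m.+1) i; rewrite /ep /w; lra.
  have [dl dl0 hdl] := evr_econt (f i) w ei0.
  apply/nbhs_ballP; exists dl => // t ht.
  move: ht; rewrite -ball_normE /= sub0r normrN => ht.
  have : `|(f i).@[shiftv w l t] - (f i).@[w]| < (f i).@[w] + ep.
    apply: hdl => i'; rewrite /shiftv addrAC subrr add0r; case: ifP => _ //.
    by rewrite normr0.
  rewrite ltr_norml => /andP[a1 a2]; lra.
have hh : \forall t \near (0 : R), forall i, - ep <= (f i).@[shiftv w l t].
  exact: (@filter_forall R _ (fun i t => - ep <= (f i).@[shiftv w l t]) (nbhs (0:R)) _ H).
have [dl dl0 hdl] := proj1 (nbhs_ballP _ _) hh.
have md0 : 0 < Num.min dl 2^-1 by rewrite lt_min dl0 invr_gt0 ltr0n.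
apply: (@crit R n _ w l (Num.min dl 2^-1) md0) => t ht.
have ht1 : `|t| < dl by apply: (lt_le_trans ht); rewrite ge_min lexx.
have ht2 : `|t| < 2^-1 by apply: (lt_le_trans ht); rewrite ge_min lexx orbT.
apply: P3.
  move=> i; rewrite /shiftv; apply: (le_trans (ler_normD _ _)).
  have := wB i; rewrite /B; case: ifP => _; rewrite ?normr0; lra.
apply: hdl; rewrite -ball_normE /= sub0r normrN //.
Qed.
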